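(* Let $G$ be a Polish group and let $B\subseteq G$ be universally measurable. The following are equivalent: (1) there exists a Borel probability measure $\mu$ on $G$ such that $\mu(gBh)=0$ for every $g,h\in G$; (2) there exists a Borel probability measure $\mu$ on $G$ such that $\mu$ has compact support and $\mu(gBh)=0$ for every $g,h\in G$; (3) there exists a Borel measure $\mu$ on $G$ such that $0<\mu(X)<\infty$ for some $\mu$-measurable set $X\subseteq G$ and $\mu(gBh)=0$ for every $g,h\in G$; (4) there exists a Borel measure $\mu$ on $G$ such that $0<\mu(C)<\infty$ for some compact set $C\subseteq G$ and $\mu(gBh)=0$ for every $g,h\in G$.
   Context: A Polish group is a topological group whose topology is separable and completely metrizable. A subset of a Polish space $X$ is universally measurable if it is $\nu$-measurable for every $\sigma$-finite Borel measure $\nu$ on $X$. Measures are outer measures (identified with the complete measure on their measurable sets); for an outer measure $\mu$ on $X$, $A$ is $\mu$-measurable if $\mu(E)=\mu(E\cap A)+\mu(E\setminus A)$ for all $E\subseteq X$; a measure is Borel if every Borel set is measurable for it. *)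

(* Defs.v *)
From HB Require Import structures.
From mathcomp Require Import all_boot all_order all_algebra.
From mathcomp Require Import all_classical all_reals all_analysis.
Set Implicit Arguments. Unset Strict Implicit. Unset Printing Implicit Defensive.
Import Order.TTheory GRing.Theory Num.Theory.
Local Open Scope classical_set_scope.
Local Open Scope ring_scope.

Definition is_group (G : Type) (mul : G -> G -> G) (inv : G -> G) (e : G) :=
  [/\ forall x y z, mul x (mul y z) = mul (mul x y) z,
      forall x, mul e x = x, forall x, mul x e = x,
      forall x, mul (inv x) x = e & forall x, mul x (inv x) = e].

Definition is_topological_group (G : topologicalType)
    (mul : G -> G -> G) (inv : G -> G) (e : G) :=
  [/\ is_group mul inv e,
      continuous (fun p : G * G => mul p.1 p.2) & continuous inv].

Definition separable_space (G : topologicalType) :=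
  exists D : set G, countable D /\ dense D.

Definition is_metric (R : realType) (G : Type) (d : G -> G -> R) :=
  [/\ forall x y, 0 <= d x y, forall x y, d x y = 0 <-> x = y,
      forall x y, d x y = d y x & forall x y z, d x z <= d x y + d y z].

Definition metric_induces_topology (R : realType) (G : topologicalType)
    (d : G -> G -> R) :=
  forall U : set G, open U <->
    (forall x, U x -> exists2 eps : R, 0 < eps & [set y | d x y < eps] `<=` U).

Definition metric_complete (R : realType) (G : Type) (d : G -> G -> R) :=
  forall u : nat -> G,
    (forall eps : R, 0 < eps -> exists N, forall m n,
       (N <= m)%N -> (N <= n)%N -> d (u m) (u n) < eps) ->
    exists x, forall eps : R, 0 < eps -> exists N, forall n,
       (N <= n)%N -> d (u n) x < eps.

Definition completely_metrizable (R : realType) (G : topologicalType) :=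
  exists d : G -> G -> R,
    [/\ is_metric d, metric_induces_topology d & metric_complete d].

Definition is_polish_group (R : realType) (G : topologicalType)
    (mul : G -> G -> G) (inv : G -> G) (e : G) :=
  [/\ is_topological_group mul inv e, separable_space G
    & completely_metrizable R G].

Definition borel_set (G : topologicalType) : set (set G) := <<s open >>.

Local Open Scope ereal_scope.

Definition is_borel_measure (R : realType) (G : topologicalType)
    (mu : {outer_measure set G -> \bar R}) :=
  forall A, borel_set A -> mu.-caratheodory A.

Definition is_borel_probability (R : realType) (G : topologicalType)
    (mu : {outer_measure set G -> \bar R}) :=
  is_borel_measure mu /\ mu setT = 1.

Definition is_sigma_finite (R : realType) (G : Type)
    (mu : {outer_measure set G -> \bar R}) :=
  exists F : nat -> set G,
    [/\ forall n, mu.-caratheodory (F n), forall n, mu (F n) < +oo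
      & \bigcup_n F n = setT].

Definition universally_measurable (R : realType) (G : topologicalType)
    (B : set G) :=
  forall nu : {outer_measure set G -> \bar R},
    is_borel_measure nu -> is_sigma_finite nu -> nu.-caratheodory B.

Definition measure_support (R : realType) (G : topologicalType)
    (mu : {outer_measure set G -> \bar R}) : set G :=
  [set x | forall U : set G, open U -> U x -> 0 < mu U].

Definition translate2 (G : Type) (mul : G -> G -> G) (g h : G) (B : set G)
  : set G := [set mul (mul g b) h | b in B].

(* Main.v *)
Require Import Defs.
From HB Require Import structures.
From mathcomp Require Import all_boot all_order all_algebra.
From mathcomp Require Import all_classical all_reals all_analysis.
Local Open Scope classical_set_scope.
Local Open Scope ring_scope.
Local Open Scope ereal_scope.
From mathcomp Require Import lra.
Set Implicit Arguments. Unset Strict Implicit. Unset Printing Implicit Defensive.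
Import Order.TTheory GRing.Theory Num.Theory.
Lemma cara_cvg0p (R : realType) (T : pointedType)
  (mu : {outer_measure set T -> \bar R}) (B : nat -> set T) :
  mu (B 0%N) < +oo -> (forall i, mu.-caratheodory (B i)) ->
  nonincreasing_seq B -> \bigcap_n B n = set0 ->
  forall eps : R, (0 < eps)%R -> exists N, mu (B N) < eps%:E.
Proof.
move=> B0 mB nB B0c eps eps0.
have := @nonincreasing_cvg_mu _ (caratheodory_type mu) R mu B B0 mB.
rewrite B0c measure0 => /(_ measurable0 nB) /fine_cvgP [Hfin Hcv].
move/cvgrPdist_lt : Hcv => /(_ eps eps0) Hn.
have [N _ HN] := filterI Hfin Hn.
exists N; have [/= h1 h2] := HN N (leqnn N).
rewrite -(fineK h1) lte_fin; move: h2; rewrite sub0r normrN.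
by move/(le_lt_trans (ler_norm _)).
Qed.
Definition pT (T : Type) (x0 : T) := T.
HB.instance Definition _ (T : Type) (x0 : T) := gen_eqMixin (pT x0).
HB.instance Definition _ (T : Type) (x0 : T) := gen_choiceMixin (pT x0).
HB.instance Definition _ (T : Type) (x0 : T) := isPointed.Build (pT x0) x0.
Lemma cara_cvg0 (R : realType) (T : Type) (x0 : T)
  (mu : {outer_measure set T -> \bar R}) (B : nat -> set T) :
  mu (B 0%N) < +oo -> (forall i, mu.-caratheodory (B i)) ->
  nonincreasing_seq B -> \bigcap_n B n = set0 ->
  forall eps : R, (0 < eps)%R -> exists N, mu (B N) < eps%:E.
Proof. exact (@cara_cvg0p R [the pointedType of pT x0] mu B). Qed.

Section Rmu.
Variables (R : realType) (T : Type) (mu : {outer_measure set T -> \bar R}).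
Variables (A : set T) (c : R).
Definition rmu : set T -> \bar R := fun S => (`|c|)%:E * mu (S `&` A).

Let rmu0 : rmu set0 = 0.
Proof. by rewrite /rmu set0I outer_measure0 mule0. Qed.
Let rmu_ge0 S : 0 <= rmu S.
Proof. by apply: mule_ge0; [rewrite lee_fin normr_ge0|exact: outer_measure_ge0]. Qed.
Let rmu_le : {homo rmu : X Y / X `<=` Y >-> X <= Y}.
Proof.
move=> X Y XY; apply: lee_wpmul2l; first by rewrite lee_fin normr_ge0.
by apply: le_outer_measure; exact: setSI.
Qed.
Let rmu_sub : sigma_subadditive rmu.
Proof.
move=> F; rewrite /rmu nneseriesZl; last by move=> *; exact: outer_measure_ge0.
apply: lee_wpmul2l; first by rewrite lee_fin normr_ge0.
rewrite setI_bigcupl; exact: outer_measure_sigma_subadditive.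
Qed.
HB.instance Definition _ := isOuterMeasure.Build R T rmu rmu0 rmu_ge0 rmu_le rmu_sub.

Lemma rmu_cara S : mu.-caratheodory S -> rmu.-caratheodory S.
Proof.
move=> mS X; rewrite /rmu (mS (X `&` A)) ge0_muleDr ?outer_measure_ge0//.
by rewrite setIAC [(X `&` A) `&` ~` S]setIAC.
Qed.
Lemma rmu_le_mu S : rmu S <= (`|c|)%:E * mu S.
Proof.
apply: lee_wpmul2l; first by rewrite lee_fin normr_ge0.
by apply: le_outer_measure; exact: subIsetl.
Qed.
End Rmu.

Section Met.
Variables (R : realType) (G : topologicalType) (d : G -> G -> R).
Hypotheses (hd : is_metric d) (ht : metric_induces_topology d).
Local Open Scope ring_scope.

Lemma d_ge0 x y : 0 <= d x y. Proof. by case: hd. Qed.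
Lemma d_sym x y : d x y = d y x. Proof. by case: hd. Qed.
Lemma d_tri x y z : d x z <= d x y + d y z. Proof. by case: hd. Qed.
Lemma d_xx x : d x x = 0. Proof. by case: hd => _ h _ _; apply h. Qed.
Lemma d_eq x y : d x y = 0 -> x = y. Proof. by case: hd => _ h _ _; apply h. Qed.

Lemma ballU_open (P : set nat) (cen : nat -> G) (r : R) :
  open [set y | exists k, P k /\ d (cen k) y < r].
Proof.
apply/ht => y [k [Pk dy]]; exists (r - d (cen k) y); first by rewrite subr_gt0.
move=> z /= dz; exists k; split => //; have := d_tri (cen k) y z; lra.
Qed.

Lemma ball_open x r : open [set y | d x y < r].
Proof.
suff -> : [set y | d x y < r] = [set y | exists k : nat, setT k /\ d ((fun=> x) k) y < r].
  exact: ballU_open.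
apply/funext => y; apply/propext; split; [by move=> h; exists 0%N|by case=> k []].
Qed.

Lemma open_ball U x : open U -> U x -> exists2 eps, 0 < eps & [set y | d x y < eps] `<=` U.
Proof. by move=> oU Ux; apply: (ht U).1. Qed.

Lemma hausdorffG : hausdorff_space G.
Proof.
move=> p q cl; apply: contrapT => pq.
have r0 : 0 < d p q.
  by rewrite lt_neqAle d_ge0 andbT; apply/eqP => /esym /d_eq.
have := cl [set y | d p y < d p q / 2] [set y | d q y < d p q / 2].
case.
- by apply: open_nbhs_nbhs; split; [exact: ball_open|rewrite /= d_xx; lra].
- by apply: open_nbhs_nbhs; split; [exact: ball_open|rewrite /= d_xx; lra].
move=> z [/= h1 h2]; have := d_tri p z q; rewrite (d_sym z q); lra.
Qed.

Lemma closed_borel (C : set G) : closed C -> borel_set C.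
Proof.
move=> cC; rewrite -(setCK C) -setTD; apply: sigma_algebraCD.
by apply: sub_sigma_algebra; exact: closed_openC.
Qed.

Lemma compact_borel (C : set G) : compact C -> borel_set C.
Proof. by move=> /(compact_closed hausdorffG); exact: closed_borel. Qed.
End Met.

Lemma ultra_finU (T : Type) (F : set_system T) (U : UltraFilter F) (P : nat -> set T) N :
  F [set y | exists k, (k < N)%N /\ P k y] -> exists k, (k < N)%N /\ F (P k).
Proof.
elim: N => [|N IH] FN.
  by have [y [k []]] := filter_ex FN.
have [FP|FnP] := in_ultra_setVsetC (P N) U; first by exists N.
have [|k [kN Fk]] := IH.
  apply: filterS (filterI FN FnP) => y [[k [kN Pk]] nPN].
  exists k; split => //; rewrite ltnS leq_eqVlt in kN.
  by case/orP: kN => [/eqP kN|//]; subst k.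
by exists k; split => //; exact: ltnW.
Qed.

Local Open Scope ring_scope.
Lemma small_rad (R : realType) (eps : R) : 0 < eps ->
  exists N, forall n, (N <= n)%N -> 2 * (n.+1%:R)^-1 < eps.
Proof.
move=> e0; exists (Num.truncn (2 / eps)) => n Nn.
have h := truncnS_gt (2 / eps).
have h2 : (Num.truncn (2 / eps)).+1%:R <= n.+1%:R :> R by rewrite ler_nat ltnS.
have np : 0 < n.+1%:R :> R by rewrite ltr0n.
rewrite -[2 * _]/(2 / n.+1%:R) ltr_pdivrMr // -ltr_pdivrMl //.
by rewrite mulrC; apply: lt_le_trans h h2.
Qed.

Lemma tight (R : realType) (G : topologicalType) (x0 : G)
  (nu : {outer_measure set G -> \bar R}) :
  is_borel_measure nu -> (nu setT < +oo)%E -> (0 < nu setT)%E ->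
  separable_space G -> completely_metrizable R G ->
  exists C : set G, compact C /\ (0 < nu C)%E.
Proof.
move=> hb nuf nup [D [cD dD]] [d [hd ht hc]].
case/countable_injP: cD => f finj.
pose cen n := match pselect (exists x, D x /\ f x = n) with
  | left H => proj1_sig (cid H) | right _ => x0 end.
have cenD x : D x -> cen (f x) = x.
  move=> Dx; rewrite /cen; case: pselect => [H|H]; last by exfalso; apply: H; exists x.
  case: (cid H) => z [Dz fz] /=; exact: (finj _ _ (mem_set Dz) (mem_set Dx) fz).
have cover r y : 0 < r -> exists k, d (cen k) y < r.
  move=> r0; have h1 : [set z | d y z < r] !=set0.
    by exists y => /=; rewrite (d_xx hd).
  have [x [/= dyx Dx]] := dD _ h1 (ball_open hd ht y r).
  by exists (f x); rewrite cenD // (d_sym hd).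
pose rad n : R := (n.+1%:R)^-1.
have rad0 n : 0 < rad n by rewrite /rad invr_gt0 ltr0n.
pose A n N := [set y | exists k, (k < N)%N /\ d (cen k) y < rad n].
have Acara n N : nu.-caratheodory (~` A n N).
  apply: hb; rewrite -setTD; apply: sigma_algebraCD; apply: sub_sigma_algebra.
  exact: (ballU_open hd ht).
have nonincA n : nonincreasing_seq (fun N => ~` A n N).
  move=> N M NM; apply/subsetPset => y nAy [k [kN dk]]; apply: nAy.
  by exists k; split => //; exact: leq_trans kN NM.
have capA n : \bigcap_N ~` A n N = set0.
  apply/seteqP; split=> // y /= hy; have [k hk] := cover (rad n) y (rad0 n).
  by apply: (hy k.+1 I); exists k; split.
have nufin : nu setT \is a fin_num by rewrite ge0_fin_numE // outer_measure_ge0.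
pose m := fine (nu setT).
have mE : nu setT = m%:E by rewrite fineK.
have m0 : 0 < m by rewrite -lte_fin -mE.
pose e := m / 2.
have : forall n, exists N, (nu (~` A n N) < (e / (2 ^ n.+1)%:R)%:E)%E.
  move=> n; apply: (cara_cvg0 x0) => //.
  - exact: le_lt_trans (le_outer_measure nu _ _ (subsetT _)) nuf.
  - by rewrite divr_gt0 // ?ltr0n ?expn_gt0 // divr_gt0.
case/choice => Nn HN.
pose K := [set y | forall n, exists k, (k < Nn n)%N /\ d (cen k) y <= rad n].
exists K; split; last first.
  have h1 := le_outer_measureIC nu K setT; rewrite !setTI in h1.
  have h2 : (nu (~` K) <= e%:E)%E.
    apply: le_trans (le_outer_measure nu (~` K) (\bigcup_n ~` A n (Nn n)) _) _.
      move=> y nKy; apply: contrapT => hy; apply: nKy => n.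
      have [[k [kN dk]]|nA] := pselect (A n (Nn n) y).
        by exists k; split => //; exact: ltW.
      by exfalso; apply: hy; exists n.
    apply: le_trans (outer_measure_sigma_subadditive nu _) _.
    apply: le_trans (epsilon_trick0 xpredT _); last by rewrite divr_ge0 // ltW.
    apply: lee_nneseries => [n _ _|n _]; first exact: outer_measure_ge0.
    exact: ltW (HN n).
  rewrite lt_neqAle outer_measure_ge0 andbT; apply/eqP => K0.
  rewrite -K0 add0e mE in h1; have := le_trans h1 h2; rewrite lee_fin /e; lra.
rewrite compact_ultra => F UF FK.
pose cb k n := [set y | d (cen k) y <= rad n].
have : forall n, exists k, (k < Nn n)%N /\ F (cb k n).
  move=> n; apply: (ultra_finU UF); apply: filterS FK => y /(_ n) [k hk].
  by exists k.
case/choice => kn Hkn.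
have FS : forall n, F [set y | forall j, (j <= n)%N -> cb (kn j) j y].
  elim=> [|n IH].
    by apply: filterS (Hkn 0%N).2 => y hy j; rewrite leqn0 => /eqP ->.
  apply: filterS (filterI IH (Hkn n.+1).2) => y [h1 h2] j.
  by rewrite leq_eqVlt ltnS => /orP [/eqP ->|/h1].
have : forall n, exists y, K y /\ forall j, (j <= n)%N -> cb (kn j) j y.
  move=> n; have [y [Ky hy]] := filter_ex (filterI FK (FS n)); by exists y.
case/choice => ys Hys.
have ycb n k : (n <= k)%N -> cb (kn n) n (ys k) := (Hys k).2 n.
have hcauchy : forall eps, 0 < eps -> exists N, forall i j, (N <= i)%N -> (N <= j)%N ->
    d (ys i) (ys j) < eps.
  move=> eps e0; have [N HNe] := small_rad e0; exists N => i j Ni Nj.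
  have h1 := ycb N i Ni; have h2 := ycb N j Nj; rewrite /cb /= in h1 h2.
  have h3 := d_tri hd (ys i) (cen (kn N)) (ys j); rewrite (d_sym hd (ys i) (cen _)) in h3.
  have h4 := HNe N (leqnn N); rewrite /rad in h1 h2 h4; move: h1 h2 h3 h4; set c := (_^-1); move=> *; lra.
have [y hy] := hc ys hcauchy.
have ycb' n : cb (kn n) n y.
  rewrite /cb /=; apply/ler_addgt0Pr => del del0.
  have [M HM] := hy del del0.
  have h1 := HM (maxn M n) (leq_maxl _ _).
  have h2 := ycb n (maxn M n) (leq_maxr _ _).
  have h3 := d_tri hd (cen (kn n)) (ys (maxn M n)) y; rewrite /cb /rad /= in h2 *; move: h1 h2 h3; set c := (_^-1); move=> *; lra.
exists y; split.
  by move=> n; exists (kn n); split; [exact: (Hkn n).1|exact: ycb'].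
move=> V; rewrite nbhsE => -[B [oB By] BV].
have [eps e0 hB] := open_ball ht oB By.
have [N HN'] := small_rad e0.
apply: filterS (Hkn N).2 => z hz; apply: BV; apply: hB => /=.
have h1 := d_tri hd y (cen (kn N)) z; rewrite (d_sym hd y (cen _)) in h1; have h2 := ycb' N.
have h3 := HN' N (leqnn N); rewrite /cb /rad /= in hz h2 h3; move: h1 h2 h3 hz; set c := (_^-1); move=> *; lra.
Qed.

Lemma support_closed (R : realType) (G : topologicalType)
  (mu : {outer_measure set G -> \bar R}) : closed (measure_support mu).
Proof.
rewrite -openC openE => x nsx.
have [U [oU Ux nU]] : exists U, [/\ open U, U x & ~ (0 < mu U)%E].
  apply: contrapT => h; apply: nsx => U oU Ux; apply: contrapT => hn.
  by apply: h; exists U.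
apply: filterS (@open_nbhs_nbhs _ x U (conj oU Ux)) => y Uy sy.
exact: nU (sy U oU Uy).
Qed.

Lemma cara_setT (R : realType) (T : Type) (mu : {outer_measure set T -> \bar R}) :
  mu.-caratheodory setT.
Proof. by move=> X; rewrite setIT setCT setI0 outer_measure0 adde0. Qed.

Unset Implicit Arguments.
Local Open Scope ring_scope.
Local Open Scope ereal_scope.
Theorem theorem4p4 (R : realType) (G : topologicalType)
    (mul : G -> G -> G) (inv : G -> G) (e : G) (B : set G) :
  is_polish_group R mul inv e ->
  universally_measurable R B ->
  let P1 := exists mu : {outer_measure set G -> \bar R},
      is_borel_probability mu /\
      (forall g h, mu (translate2 mul g h B) = 0) in
  let P2 := exists mu : {outer_measure set G -> \bar R},
      [/\ is_borel_probability mu, compact (measure_support mu)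
        & forall g h, mu (translate2 mul g h B) = 0] in
  let P3 := exists mu : {outer_measure set G -> \bar R},
      [/\ is_borel_measure mu,
          (exists X : set G, [/\ mu.-caratheodory X, 0 < mu X & mu X < +oo])
        & forall g h, mu (translate2 mul g h B) = 0] in
  let P4 := exists mu : {outer_measure set G -> \bar R},
      [/\ is_borel_measure mu,
          (exists C : set G, [/\ compact C, 0 < mu C & mu C < +oo])
        & forall g h, mu (translate2 mul g h B) = 0] in
  [/\ P1 <-> P2, P2 <-> P3 & P3 <-> P4].
Proof.
move=> [_ hsep hcm] _ P1 P2 P3 P4.
have [d [hd ht _]] := hcm.
have i21 : P2 -> P1 by rewrite /P2 /P1; case=> mu [hp _ h0]; exists mu.
have i13 : P1 -> P3.
  rewrite /P1 /P3; case=> mu [[hb h1] h0]; exists mu; split => //; exists setT; split.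
  - exact: cara_setT.
  - by rewrite h1 lte01.
  - by rewrite h1 ltey.
have i43 : P4 -> P3.
  rewrite /P4 /P3; case=> mu [hb [C [cC C0 Cf]] h0]; exists mu; split => //; exists C; split => //.
  apply: hb; exact: (compact_borel hd ht cC).
have i34 : P3 -> P4.
  rewrite /P3 /P4; case=> mu [hb [X [hX X0 Xf]] h0].
  have hb' : is_borel_measure (rmu mu X 1).
    by move=> S /hb; exact: rmu_cara.
  have nT : rmu mu X 1 setT = mu X by rewrite /rmu normr1 mul1e setTI.
  have nTle : rmu mu X 1 setT <= mu X by rewrite nT.
  have nTge : mu X <= rmu mu X 1 setT by rewrite nT.
  have [C [cC C0]] : exists C, compact C /\ 0 < rmu mu X 1 C.
    apply: (@tight R G e) => //.
      exact: le_lt_trans nTle Xf.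
    exact: lt_le_trans X0 nTge.
  exists (rmu mu X 1); split => //.
    exists C; split => //.
    apply: le_lt_trans (le_outer_measure _ _ _ (subsetT C)) _.
    exact: le_lt_trans nTle Xf.
  move=> g h; apply/eqP; rewrite eq_le outer_measure_ge0 andbT.
  have := rmu_le_mu mu X 1 (translate2 mul g h B); rewrite h0 mule0; exact.
have i42 : P4 -> P2.
  rewrite /P4 /P2; case=> mu [hb [C [cC C0 Cf]] h0].
  have mCfin : mu C \is a fin_num by rewrite ge0_fin_numE // outer_measure_ge0.
  have mpos : (0 < fine (mu C))%R by rewrite -lte_fin fineK.
  pose c := (fine (mu C))^-1%R.
  have c0 : (0 < c)%R by rewrite /c invr_gt0.
  have hb' : is_borel_measure (rmu mu C c).
    by move=> S /hb; exact: rmu_cara.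
  exists (rmu mu C c); split.
  - split => //.
    have : rmu mu C c setT = 1.
      rewrite /rmu setTI -(fineK mCfin) -EFinM gtr0_norm //.
      by rewrite /c mulVf // gt_eqF.
    exact.
  - apply: (subclosed_compact (@support_closed _ _ _) cC) => x sx.
    apply: contrapT => nCx.
    have oC : open (~` C) by apply: closed_openC; exact: (compact_closed (hausdorffG hd ht)).
    have h1 := sx _ oC nCx.
    have h2 : rmu mu C c (~` C) <= 0 by rewrite /rmu setICl outer_measure0 mule0.
    by have := lt_le_trans h1 h2; rewrite ltxx.
  - move=> g h; apply/eqP; rewrite eq_le outer_measure_ge0 andbT.
    have := rmu_le_mu mu C c (translate2 mul g h B); rewrite h0 mule0; exact.
split; split.
- by move=> /i13 /i34 /i42.
- exact: i21.
- by move=> /i21 /i13.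
- by move=> /i34 /i42.
- exact: i34.
- exact: i43.
Qed.
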